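(* Let $H\ge2$ be an integer and consider an $H$-round online first-price auction in which $v_t=1$ for all $t\in\{1,\dots,H\}$ and \[ m_t=\begin{cases}0,& t<\tau,\\ \delta,&\tau\le t\le H,\end{cases} \] where $\tau$ is drawn uniformly at random from $\{1,2,\dots,H\}$ and $\delta=\frac1H$. Then every non-anticipatory (admissible) policy has expected dynamic regret at least $\frac12-\frac1{2H}$, i.e. \[ \mathbb{E}\left[\sum_{t=1}^H\max\{v_t-m_t,0\}-\sum_{t=1}^H r(b_t;v_t,m_t)\right]\ge\frac12-\frac1{2H}, \] the expectation being over $\tau$ and the policy's randomness.
   Context: In an $H$-round online first-price auction, at each round $t$ the learner observes its value $v_t\in[0,1]$, submits a bid $b_t\in[0,1]$, then observes $m_t\in[0,1]$, the highest bid of the other bidders, and receives reward $r(b_t;v_t,m_t)$ with $r(b;v,m)\coloneqq(v-b)\mathbbm{1}(b\ge m)$. A non-anticipatory (admissible) policy chooses $b_t=\pi_t((v_s,m_s)_{s=1}^{t-1},v_t,U)$ for measurable functions $\pi_t$ and an internal random variable $U$ independent of $\tau$. *)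

(* Defs.v *)
From HB Require Import structures.
From mathcomp Require Import all_boot all_order all_algebra.
From mathcomp Require Import all_classical all_reals all_analysis.
Set Implicit Arguments. Unset Strict Implicit. Unset Printing Implicit Defensive.
Import Order.TTheory GRing.Theory Num.Theory.
Local Open Scope ring_scope.

Definition reward (R : realType) (b v m : R) : R :=
  (v - b) * (if m <= b then 1 else 0).

Definition mt (R : realType) (H tau t : nat) : R :=
  if (t < tau)%N then 0 else (H%:R)^-1.

Definition vt (R : realType) (t : nat) : R := 1.

Definition history (R : realType) (H tau t : nat) : seq (R * R) :=
  [seq (vt R s, mt R H tau s) | s <- iota 1 t.-1].

(* A policy: pi t h v u = bid at round t given history h, current value v,
   and the policy's internal random variable u. *)
Definition bid (R : realType) (U : Type)
  (pi : nat -> seq (R * R) -> R -> U -> R) (H tau t : nat) (u : U) : R :=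
  pi t (history R H tau t) (vt R t) u.

Definition regret (R : realType) (U : Type)
  (pi : nat -> seq (R * R) -> R -> U -> R) (H tau : nat) (u : U) : R :=
  \sum_(1 <= t < H.+1)
     (Num.max (vt R t - mt R H tau t) 0
      - reward (bid pi H tau t u) (vt R t) (mt R H tau t)).

(* Main.v *)
Require Import Defs.
From HB Require Import structures.
From mathcomp Require Import all_boot all_order all_algebra.
From mathcomp Require Import all_classical all_reals all_analysis.
From mathcomp Require Import measurable_realfun.
From mathcomp Require Import zify ring lra.
Import Order.TTheory GRing.Theory Num.Theory.
Local Open Scope ring_scope.

Set Implicit Arguments.
Section S.
Variable R : realType.

Definition term (m b : R) := Num.max (1 - m) 0 - reward b 1 m.

Lemma term_lt (b : R) : 0 <= b -> term 0 b = b.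
Proof.
move=> b0; rewrite /term /reward b0 subr0 mulr1.
rewrite (_ : Num.max 1 0 = 1); first by ring.
by apply/max_idPl; rewrite ler01.
Qed.

Lemma term_ge (x b : R) : 0 <= x <= 1 -> 0 <= term x b.
Proof.
move=> /andP[x0 x1]; rewrite /term /reward.
rewrite (_ : Num.max (1 - x) 0 = 1 - x); last by apply/max_idPl; lra.
by case: ifP => h; lra.
Qed.

Lemma term_bound (x k b : R) : 0 < x -> 0 <= k -> k * x <= 1 - x -> 0 <= b ->
  k * x <= term x b + k * b.
Proof.
move=> x0 k0 kx b0; rewrite /term /reward.
rewrite (_ : Num.max (1 - x) 0 = 1 - x); last by apply/max_idPl; nra.
case: ifP => h; last first. have : 0 <= k * b by apply: mulr_ge0. lra.
have : k * x <= k * b by apply: ler_wpM2l.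
lra.
Qed.

Lemma hist_eq H tau tau' t : (t <= tau)%N -> (t <= tau')%N ->
  history R H tau t = history R H tau' t.
Proof.
move=> h1 h2; apply/eq_in_map => s; rewrite mem_iota => /andP[s1 hs].
have hst : (s < t)%N by lia.
by rewrite /mt (leq_trans hst h1) (leq_trans hst h2).
Qed.

Lemma nat_sum n : (\sum_(1 <= t < n.+1) (n - t)).*2 = n * n.-1.
Proof.
elim: n => [|n IH]; first by rewrite big_geq.
rewrite big_nat_recl //.
under eq_bigr do rewrite subSS.
rewrite doubleD IH.
change (((n.+1 - 1).*2 + n * n.-1)%N = (n.+1 * n)%N).
case: n {IH} => [|n] //=; lia.
Qed.

Lemma regret_term U (pi : nat -> seq (R * R) -> R -> U -> R) H tau u :
  regret pi H tau u = \sum_(1 <= t < H.+1) term (mt R H tau t) (bid pi H tau t u).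
Proof. by []. Qed.

Definition cb U (pi : nat -> seq (R * R) -> R -> U -> R) H t u :=
  pi t (history R H H.+1 t) 1 u.

Definition fl U (pi : nat -> seq (R * R) -> R -> U -> R) H tau t u :=
  if (t < tau)%N then cb pi H t u
  else if t == tau then term (H%:R^-1) (cb pi H t u) else 0.

Lemma regret_ge U (pi : nat -> seq (R * R) -> R -> U -> R)
  (pi_bid : forall t h v u, (0 <= pi t h v u <= 1)%R) H (hH : (1 <= H)%N) tau u :
  (tau <= H)%N ->
  \sum_(1 <= t < H.+1) fl pi H tau t u <= regret pi H tau u.
Proof.
move=> htau; rewrite regret_term; apply: ler_sum_nat => t /andP[t1 tH].
have Hx : 0 <= (H%:R : R)^-1 <= 1.
  by rewrite invr_ge0 ler0n /= invf_le1 ?ler1n // ltr0n.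
rewrite /fl /mt /bid /vt.
case: ltnP => ht.
  rewrite term_lt; last by case/andP: (pi_bid t (history R H tau t) 1 u).
  by rewrite /cb (@hist_eq H tau H.+1) //; lia.
case: eqVneq => [->|hne].
  by rewrite /cb (@hist_eq H tau H.+1) //; lia.
exact: term_ge.
Qed.

Lemma sum_fl U (pi : nat -> seq (R * R) -> R -> U -> R) H t u :
  (1 <= t <= H)%N ->
  \sum_(1 <= tau < H.+1) fl pi H tau t u =
  term (H%:R^-1) (cb pi H t u) + (H - t)%:R * cb pi H t u.
Proof.
move=> /andP[t1 tH].
rewrite (@big_cat_nat _ _ _ t) //=; last by lia.
rewrite big1_seq; last first.
  move=> i /andP[_]; rewrite mem_index_iota => /andP[_ hi].
  rewrite /fl (_ : (t < i)%N = false); last by lia.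
  by rewrite (_ : (t == i) = false) //; apply/negbTE; rewrite neq_ltn hi orbT.
rewrite add0r big_ltn; last by lia.
rewrite /fl ltnn eqxx; congr (_ + _).
rewrite (eq_big_nat _ _ (F2 := fun _ => cb pi H t u)); last first.
  by move=> i /andP[hi _]; rewrite hi.
by rewrite sumr_const_nat mulr_natl subSS.
Qed.

Lemma total_ge U (pi : nat -> seq (R * R) -> R -> U -> R)
  (pi_bid : forall t h v u, (0 <= pi t h v u <= 1)%R) H (hH : (1 <= H)%N) u :
  (H%:R - 1) / 2 <= \sum_(1 <= tau < H.+1) regret pi H tau u.
Proof.
apply: le_trans (_ : \sum_(1 <= tau < H.+1) \sum_(1 <= t < H.+1) fl pi H tau t u <= _);
  last first.
  apply: ler_sum_nat => tau /andP[_ ht]; apply: regret_ge => //; lia.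
rewrite exchange_big /=.
apply: le_trans (_ : \sum_(1 <= t < H.+1) (H - t)%:R * H%:R^-1 <= _); last first.
  apply: ler_sum_nat => t /andP[t1 tH]; rewrite sum_fl; last by rewrite t1 -ltnS.
  apply: term_bound.
  - by rewrite invr_gt0 ltr0n.
  - by rewrite ler0n.
  - have ht1 : (1 : R) <= t%:R by rewrite ler1n.
    have hk : ((H - t)%:R : R) <= H%:R - 1 by rewrite (natrB _ (tH : (t <= H)%N)); lra.
    apply: le_trans (_ : (H%:R - 1) * H%:R^-1 <= _).
      by apply: ler_wpM2r; rewrite ?invr_ge0 ?ler0n.
    by rewrite mulrBl mulfV ?mul1r // pnatr_eq0 -lt0n.
  - by case/andP: (pi_bid t (history R H H.+1 t) 1 u).
rewrite -mulr_suml -natr_sum.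
have := nat_sum H; move: (\sum_(1 <= t < H.+1) (H - t))%N => s hs.
have -> : (s%:R : R) = (H%:R * (H%:R - 1)) / 2.
  have : (s.*2)%:R = (H * H.-1)%:R :> R by rewrite hs.
  rewrite natrM -muln2 natrM (_ : H.-1%:R = H%:R - 1 :> R); last first.
    by rewrite -subn1 natrB.
  by move=> e; rewrite -e; field.
have hH0 : (H%:R : R) != 0 by rewrite pnatr_eq0 -lt0n.
rewrite le_eqVlt; apply/orP; left; apply/eqP.
first [by field | by field; exact: hH0].
Qed.

Lemma regret_meas d (U : measurableType d) (pi : nat -> seq (R * R) -> R -> U -> R)
  (pi_meas : forall t h v, measurable_fun setT (pi t h v)) H tau :
  measurable_fun setT (regret pi H tau).
Proof.
rewrite (_ : regret pi H tau = fun u => \sum_(1 <= t < H.+1)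
   term (mt R H tau t) (bid pi H tau t u)); last by apply/funext => u.
apply: measurable_sum => t.
rewrite /term /reward /bid.
apply: measurable_funB => //.
apply: measurable_funM.
  by apply: measurable_funB => //; exact: pi_meas.
apply: measurable_fun_ifT => //.
by apply: measurable_fun_ler => //; exact: pi_meas.
Qed.

Lemma regret_ge0 U (pi : nat -> seq (R * R) -> R -> U -> R)
  (pi_bid : forall t h v u, (0 <= pi t h v u <= 1)%R) H (hH : (1 <= H)%N) tau u :
  0 <= regret pi H tau u.
Proof.
rewrite regret_term; apply: sumr_ge0 => t _; rewrite /mt.
case: ifP => _.
  by rewrite term_lt //; case/andP: (pi_bid t (history R H tau t) (vt R t) u).
by apply: term_ge; rewrite invr_ge0 ler0n /= invf_le1 ?ler1n // ltr0n.
Qed.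
End S.
Unset Implicit Arguments.
Local Open Scope ereal_scope.

Theorem lemma2 (R : realType) (H : nat) (hH : (2 <= H)%N)
  (d : measure_display) (U : measurableType d) (P : probability U R)
  (pi : nat -> seq (R * R) -> R -> U -> R)
  (pi_bid : forall t h v u, (0 <= pi t h v u <= 1)%R)
  (pi_meas : forall t h v, measurable_fun setT (pi t h v)) :
  ((1 / 2 - 1 / (2 * H%:R))%R)%:E <=
    ((H%:R)^-1)%:E *
      \sum_(1 <= tau < H.+1) \int[P]_u (regret pi H tau u)%:E.
Proof.
have H1 : (1 <= H)%N by lia.
have Hpos : (0 < (H%:R : R))%R by rewrite ltr0n.
have hH0 : (H%:R : R) != 0%R by rewrite pnatr_eq0 -lt0n.
rewrite -ge0_integral_sum //; last first.
- by move=> tau u _; rewrite lee_fin; apply: regret_ge0.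
- by move=> tau; apply/measurable_EFinP; apply: regret_meas.
have -> : ((1 / 2 - 1 / (2 * (H%:R : R)))%R)%:E =
    (((H%:R : R))^-1)%:E * ((((H%:R : R) - 1) / 2)%R)%:E.
  rewrite -EFinM; congr EFin; first [by field | by field; exact: hH0].
apply: lee_wpmul2l; first by rewrite lee_fin invr_ge0 ler0n.
apply: le_trans (_ : \int[P]_u (cst (((H%:R - 1) / 2)%R : R)%:E) u <= _).
  rewrite integral_cst //.
  rewrite [X in _ * X](_ : _ = 1) ?mule1 //; exact: probability_setT.
apply: (@ge0_le_integral _ _ _ P setT measurableT) => //.
- by move=> u _; rewrite lee_fin divr_ge0 // subr_ge0 ler1n.
- by apply: emeasurable_sum => tau; apply/measurable_EFinP; apply: regret_meas.
- move=> u _; rewrite sumEFin lee_fin; exact: total_ge.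
Qed.
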